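(* Let $M_{\mathcal X}>0$, $M_{\mathcal Y}>0$, $\kappa_t>0$, $\sigma_t>0$ for $t\in\mathcal T$, and $r=\sum_{t\in\mathcal T}\kappa_t/\sigma_t$. Consider the two-player game in which $\mathcal X$ chooses $\boldsymbol X\in\mathbb R^T_{\ge0}$ with $\sum_t\kappa_tX_t=M_{\mathcal X}$ and receives $\pi^*_{\mathrm{WL}}(\boldsymbol X,\boldsymbol Y)$, while $\mathcal Y$ chooses $\boldsymbol Y\in\mathbb R^T_{\ge0}$ with $\sum_t\sigma_tY_t=M_{\mathcal Y}$ and receives $1-\pi^*_{\mathrm{WL}}(\boldsymbol X,\boldsymbol Y)$. Then the equilibrium investment profile is $$X^*_t=\frac{M_{\mathcal X}}{\kappa_t}\cdot\frac{\kappa_t/\sigma_t}{r},\qquad Y^*_t=\frac{M_{\mathcal Y}}{\sigma_t}\cdot\frac{\kappa_t/\sigma_t}{r},\qquad t\in\mathcal T,$$ and the equilibrium payoffs are $\pi^*_{\mathrm{WL}}(\boldsymbol X^*,\boldsymbol Y^* )=L\big(\frac{M_{\mathcal Y}}{M_{\mathcal X}}r\big)$ for $\mathcal X$ and $1-L\big(\frac{M_{\mathcal Y}}{M_{\mathcal X}}r\big)$ for $\mathcal Y$.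
   Context: $\mathcal T=\{1,\dots,T\}$, $T\ge1$. The function $L:[0,\infty]\to[0,1]$ is $L(\alpha)=1-\alpha/2$ if $\alpha\le1$, $L(\alpha)=1/(2\alpha)$ if $1<\alpha<\infty$, $L(\infty)=0$. For $\boldsymbol X,\boldsymbol Y\in\mathbb R^T_{\ge0}$, $\alpha(\boldsymbol X,\boldsymbol Y)=\sum_tY_t/X_t\in[0,\infty]$, where a term with $Y_t=0$ equals $0$ and a term with $X_t=0<Y_t$ equals $+\infty$; $\pi^*_{\mathrm{WL}}(\boldsymbol X,\boldsymbol Y)=L(\alpha(\boldsymbol X,\boldsymbol Y))$. An equilibrium is a feasible pair from which neither player can strictly improve its own payoff by a unilateral feasible deviation. *)

(* Defs.v *)
From HB Require Import structures.
From mathcomp Require Import all_boot all_order all_algebra.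
From mathcomp Require Import reals constructive_ereal.
Set Implicit Arguments. Unset Strict Implicit. Unset Printing Implicit Defensive.
Import Order.TTheory GRing.Theory Num.Theory.
Local Open Scope ring_scope.
Local Open Scope ereal_scope.

Section WL.
Variables (R : realType) (T : nat).

Definition ratio_term (x y : R) : \bar R :=
  if y == 0%R then 0 else if x == 0%R then +oo else (y / x)%:E.

Definition alpha (X Y : 'I_T -> R) : \bar R :=
  \sum_(t < T) ratio_term (X t) (Y t).

(* L : [0, +oo] -> [0,1]; the value at -oo is irrelevant (alpha >= 0) *)
Definition Lfun (a : \bar R) : R :=
  match a with
  | EFin r => if (r <= 1)%R then (1 - r / 2)%R else (1 / (2 * r))%R
  | +oo => 0%R
  | -oo => 1%R
  end.

Definition piWL (X Y : 'I_T -> R) : R := Lfun (alpha X Y).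

Definition feasible (c : 'I_T -> R) (M : R) (Z : 'I_T -> R) : Prop :=
  (forall t, (0 <= Z t)%R) /\ (\sum_(t < T) c t * Z t)%R = M.

Definition is_equilibrium (kappa sigma : 'I_T -> R) (MX MY : R)
  (X Y : 'I_T -> R) : Prop :=
  [/\ feasible kappa MX X, feasible sigma MY Y,
      (forall X', feasible kappa MX X' -> (piWL X' Y <= piWL X Y)%R)
    & (forall Y', feasible sigma MY Y' -> (1 - piWL X Y' <= 1 - piWL X Y)%R)].

End WL.

(* Main.v *)
Require Import Defs.
From HB Require Import structures.
From mathcomp Require Import all_boot all_order all_algebra.
From mathcomp Require Import reals constructive_ereal.
From mathcomp Require Import ring lra.
Import Order.TTheory GRing.Theory Num.Theory.
Local Open Scope ring_scope.

Section Helpers.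
Variable R : realType.

Lemma Lfun_pos (a : R) : 0 <= a -> 0 < Lfun a%:E.
Proof.
move=> ha /=; case: ifP => h1.
  lra.
have ha1 : 1 < a by rewrite ltNge h1.
rewrite div1r invr_gt0; lra.
Qed.

Lemma Lfun_ltR (a b : R) : 0 <= a -> a < b -> Lfun b%:E < Lfun a%:E.
Proof.
move=> ha hab /=; case: ifP => hb; case: ifP => ha1.
- lra.
- have : 1 < a by rewrite ltNge ha1. lra.
- have hb1 : 1 < b by rewrite ltNge hb.
  have : 1 / (2 * b) < 1 / 2.
    rewrite !div1r ltf_pV2 ?posrE; lra.
  lra.
- have hb1 : 1 < b by rewrite ltNge hb.
  have ha2 : 1 < a by rewrite ltNge ha1.
  rewrite !div1r ltf_pV2 ?posrE; lra.
Qed.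

Local Open Scope ereal_scope.

Lemma Lfun_lt (a b : \bar R) : 0 <= a -> a < b -> (Lfun b < Lfun a)%R.
Proof.
case: a => [a| |] //; case: b => [b| |] //.
- rewrite !lee_fin lte_fin; exact: Lfun_ltR.
- move=> ha _; rewrite lee_fin in ha; exact: Lfun_pos.
Qed.

Lemma Lfun_anti (a b : \bar R) : 0 <= a -> 0 <= b ->
  (Lfun a <= Lfun b)%R -> b <= a.
Proof.
move=> ha hb hL; case: (leP b a) => // hab.
by have := Lfun_lt _ _ ha hab; rewrite ltNge hL.
Qed.

Lemma Lfun_mono (a b : \bar R) : 0 <= a -> a <= b -> (Lfun b <= Lfun a)%R.
Proof.
move=> ha; rewrite le_eqVlt => /orP [/eqP -> //| hab].
exact/ltW/(Lfun_lt _ _ ha hab).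
Qed.

Lemma ratio_ge0 (x y : R) : (0 <= x)%R -> (0 <= y)%R -> 0 <= ratio_term x y.
Proof.
move=> hx hy; rewrite /ratio_term.
case: (y == 0%R) => //.
case: (x == 0%R); first by rewrite leey.
have := divr_ge0 hy hx; by rewrite -lee_fin.
Qed.

Lemma alpha_ge0 T (X Y : 'I_T -> R) : (forall t, 0 <= X t)%R -> (forall t, 0 <= Y t)%R ->
  0 <= alpha X Y.
Proof. by move=> hx hy; apply: sume_ge0 => t _; apply: ratio_ge0. Qed.

Lemma term_le_alpha T (X Y : 'I_T -> R) s : (forall t, 0 <= X t)%R -> (forall t, 0 <= Y t)%R ->
  ratio_term (X s) (Y s) <= alpha X Y.
Proof.
move=> hx hy; rewrite /alpha (bigD1 s) //=.
by apply: leeDl; apply: sume_ge0 => t _; apply: ratio_ge0.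
Qed.

Lemma alpha_fin T (X Y : 'I_T -> R) : (forall t, Y t != 0%R -> X t != 0%R) ->
  alpha X Y = (\sum_(t < T) Y t / X t)%:E.
Proof.
move=> h; rewrite /alpha -sumEFin; apply: eq_bigr => t _; rewrite /ratio_term.
case: eqP => [->|/eqP hy]; first by rewrite mul0r.
by rewrite (negbTE (h t hy)).
Qed.

End Helpers.
Local Close Scope ereal_scope.
Local Open Scope ring_scope.

Lemma tangent (R : realType) (x y a : R) : 0 <= y -> 0 <= x -> 0 <= a ->
  (y != 0 -> x != 0 /\ a != 0) ->
  0 <= y / x - (2 * (y / a) - y / a ^+ 2 * x) /\
  (y != 0 -> y / x - (2 * (y / a) - y / a ^+ 2 * x) = 0 -> x = a).
Proof.
move=> hy hx ha h.
have [->|hy0] := eqVneq y 0.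
  by rewrite !mul0r mulr0 !subrr; split => // /eqP; rewrite eqxx.
have [hx0 ha0] := h hy0.
have e : y / x - (2 * (y / a) - y / a ^+ 2 * x) = y * (x - a) ^+ 2 / (x * a ^+ 2).
  clear h hy hx ha. by field; apply/andP; split.
rewrite e; split.
  apply: divr_ge0; apply: mulr_ge0 => //; [exact: sqr_ge0 | exact: exprn_ge0].
move=> _ /eqP; rewrite !mulf_eq0 (negbTE hy0) /= invr_eq0 mulf_eq0 (negbTE hx0) /= expf_eq0 (negbTE ha0) andbF !orbF orbb.
by rewrite subr_eq0 => /eqP.
Qed.


Arguments tangent {R x y a}.
Arguments term_le_alpha {R T X Y} s.
Arguments alpha_fin {R T X Y}.
Arguments alpha_ge0 {R T X Y}.
Arguments Lfun_anti {R a b}.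
Arguments Lfun_mono {R a b}.
Arguments Lfun_pos {R a}.

From Stdlib Require Import FunctionalExtensionality.

Theorem lemma1 (R : realType) (T : nat) (hT : (0 < T)%N)
  (MX MY : R) (kappa sigma : 'I_T -> R)
  (hMX : 0 < MX) (hMY : 0 < MY)
  (hk : forall t, 0 < kappa t) (hs : forall t, 0 < sigma t) :
  let r := \sum_(t < T) kappa t / sigma t in
  let Xs := fun t : 'I_T => MX / kappa t * ((kappa t / sigma t) / r) in
  let Ys := fun t : 'I_T => MY / sigma t * ((kappa t / sigma t) / r) in
  [/\ is_equilibrium kappa sigma MX MY Xs Ys,
      (forall X Y, is_equilibrium kappa sigma MX MY X Y -> X = Xs /\ Y = Ys),
      piWL Xs Ys = Lfun ((MY / MX * r)%:E)
    & 1 - piWL Xs Ys = 1 - Lfun ((MY / MX * r)%:E)].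
Proof.
move=> r Xs Ys.
have hk0 t : kappa t != 0 by rewrite gt_eqF.
have hs0 t : sigma t != 0 by rewrite gt_eqF.
have hMX0 : MX != 0 by rewrite gt_eqF.
have hMY0 : MY != 0 by rewrite gt_eqF.
pose t0 : 'I_T := Ordinal hT.
have hr : 0 < r.
  rewrite /r (bigD1 t0) //=.
  have h1 : 0 < kappa t0 / sigma t0 by rewrite divr_gt0.
  have h2 : 0 <= \sum_(i < T | i != t0) kappa i / sigma i.
    by apply: sumr_ge0 => i _; rewrite divr_ge0 // ltW.
  lra.
have hr0 : r != 0 by rewrite gt_eqF.
have hXs t : Xs t = MX / (sigma t * r) by rewrite /Xs; field; rewrite hr0 hs0 hk0.
have hYs t : Ys t = MY * kappa t / (sigma t ^+ 2 * r) by rewrite /Ys; field; rewrite hr0 hs0.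
have hXsp t : 0 < Xs t by rewrite hXs divr_gt0 // mulr_gt0.
have hYsp t : 0 < Ys t by rewrite hYs divr_gt0 ?mulr_gt0 ?exprn_gt0.
have fXs : feasible kappa MX Xs.
  split=> [t|]; first exact: ltW.
  rewrite (eq_bigr (fun t => MX / r * (kappa t / sigma t))) => [|t _].
    by rewrite -mulr_sumr -/r; field; rewrite hr0.
  by rewrite hXs; field; rewrite hr0 hs0.
have fYs : feasible sigma MY Ys.
  split=> [t|]; first exact: ltW.
  rewrite (eq_bigr (fun t => MY / r * (kappa t / sigma t))) => [|t _].
    by rewrite -mulr_sumr -/r; field; rewrite hr0.
  by rewrite hYs; field; rewrite hr0 hs0.
have hXsnz t : Xs t != 0 by rewrite gt_eqF.
have halpha : alpha Xs Ys = (MY / MX * r)%:E.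
  rewrite alpha_fin => [|t _]; last exact: hXsnz.
  congr (_%:E).
  rewrite (eq_bigr (fun t => MY / MX * (kappa t / sigma t))) => [|t _].
    by rewrite -mulr_sumr -/r.
  by rewrite hXs hYs; field; rewrite hr0 hs0 hMX0.
have hpi : piWL Xs Ys = Lfun ((MY / MX * r)%:E) by rewrite /piWL halpha.
have hval0 : 0 <= MY / MX * r by rewrite mulr_ge0 ?divr_ge0 ?ltW.
split => //; last by rewrite hpi.
- split => //.
  + move=> X' [hX'0 hX'sum]; rewrite hpi /piWL.
    apply: Lfun_mono; first by rewrite lee_fin.
    case: (boolP [exists t, X' t == 0]) => [/existsP [t /eqP ht]|].
      apply: le_trans (leey _) _.
      have := term_le_alpha t hX'0 (fun t => ltW (hYsp t)).
      by rewrite /ratio_term (gt_eqF (hYsp t)) ht eqxx.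
    rewrite negb_exists => /forallP hnz.
    rewrite alpha_fin => [|t _]; last exact: hnz.
    rewrite lee_fin.
    have hsum : \sum_(t < T) (2 * (Ys t / Xs t) - Ys t / Xs t ^+ 2 * X' t)
        <= \sum_(t < T) Ys t / X' t.
      apply: ler_sum => t _.
      have [h _] := tangent (ltW (hYsp t)) (hX'0 t) (ltW (hXsp t))
        (fun _ => conj (hnz t) (hXsnz t)).
      by rewrite -subr_ge0.
    apply: le_trans hsum; rewrite le_eqVlt; apply/orP; left; apply/eqP.
    rewrite (eq_bigr (fun t => (2 * MY / MX) * (kappa t / sigma t)
       - (MY * r / MX ^+ 2) * (kappa t * X' t))) => [|t _].
      by rewrite sumrB -!mulr_sumr -/r hX'sum; field; rewrite hMX0.
    by rewrite hXs hYs; field; rewrite hr0 hs0 hMX0.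
  + move=> Y' [hY'0 hY'sum].
    suff -> : piWL Xs Y' = piWL Xs Ys by [].
    rewrite hpi /piWL alpha_fin => [|t _]; last exact: hXsnz.
    congr (Lfun _%:E).
    rewrite (eq_bigr (fun t => r / MX * (sigma t * Y' t))) => [|t _].
      by rewrite -mulr_sumr hY'sum; field; rewrite hMX0.
    by rewrite hXs; field; rewrite hr0 hs0 hMX0.
- move=> X Y [[hX0 hXsum] [hY0 hYsum] hXopt hYopt].
  pose s t := Num.sqrt (Y t / kappa t).
  pose S := \sum_(t < T) kappa t * s t.
  have hs0' t : 0 <= s t by apply: sqrtr_ge0.
  have hYs' t : Y t = kappa t * s t ^+ 2.
    rewrite /s sqr_sqrtr; last by apply: divr_ge0; [exact: hY0 | exact: ltW].
    by field; rewrite hk0.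
  have hsY t : (s t == 0) = (Y t == 0).
    apply/eqP/eqP => h.
      by rewrite hYs' h expr0n /= mulr0.
    by rewrite /s h mul0r sqrtr0.
  have hSp : 0 < S.
    rewrite lt_def sumr_ge0 ?andbT => [|t _]; last by apply: mulr_ge0; [exact: ltW | exact: hs0'].
    apply/negP => /eqP /psumr_eq0P h.
    have h' := h (fun i _ => mulr_ge0 (ltW (hk i)) (hs0' i)).
    have hY00 t : Y t = 0.
      apply/eqP; rewrite -hsY; have /eqP := h' t isT.
      by rewrite mulf_eq0 (negbTE (hk0 t)).
    move: hYsum; rewrite big1 => [|t _]; last by rewrite hY00 mulr0.
    move=> h0; move: hMY; rewrite -h0 ltxx //.
  have hS0 : S != 0 by rewrite gt_eqF.
  pose X' t := MX * s t / S.
  have hX'0 t : 0 <= X' t.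
    by apply: divr_ge0; [apply: mulr_ge0; [exact: ltW | exact: hs0'] | exact: ltW].
  have fX' : feasible kappa MX X'.
    split => //.
    rewrite (eq_bigr (fun t => MX / S * (kappa t * s t))) => [|t _].
      by rewrite -mulr_sumr -/S; field.
    by rewrite /X'; field.
  have hYX' t : Y t / X' t = kappa t * s t * S / MX.
    have [hst|hst] := eqVneq (s t) 0.
      by move/eqP: (hst); rewrite hsY => /eqP ->; rewrite hst !mul0r mulr0 !mul0r.
    by rewrite /X' hYs'; field; rewrite hst hS0 hMX0.
  have hYX'2 t : Y t / X' t ^+ 2 * X t <= kappa t * S ^+ 2 / MX ^+ 2 * X t.
    apply: ler_wpM2r => //.
    have [hst|hst] := eqVneq (s t) 0.
      move/eqP: (hst); rewrite hsY => /eqP ->; rewrite mul0r.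
      by apply: divr_ge0; [apply: mulr_ge0; [exact: ltW | apply: exprn_ge0; exact: ltW] | apply: exprn_ge0; exact: ltW].
    by rewrite le_eqVlt; apply/orP; left; apply/eqP; rewrite /X' hYs'; field; rewrite hst hS0 hMX0.
  have hX'nz t : Y t != 0 -> X' t != 0.
    rewrite -hsY => hst; rewrite /X' !mulf_neq0 ?invr_eq0 //.
  have hsumYX' : \sum_(t < T) Y t / X' t = S ^+ 2 / MX.
    rewrite (eq_bigr (fun t => S / MX * (kappa t * s t))) => [|t _].
      by rewrite -mulr_sumr -/S; field.
    by rewrite hYX'; field.
  have hA' : alpha X' Y = (S ^+ 2 / MX)%:E by rewrite alpha_fin // hsumYX'.
  have hA'0 : (0 <= alpha X' Y)%E by apply: alpha_ge0.
  have hA0 : (0 <= alpha X Y)%E by apply: alpha_ge0.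
  have hle : (alpha X Y <= alpha X' Y)%E.
    by apply: (Lfun_anti hA'0 hA0); exact: hXopt.
  have hXnz t : Y t != 0 -> X t != 0.
    move=> hy; apply/negP => /eqP hx.
    have := term_le_alpha t hX0 hY0.
    rewrite /ratio_term (negbTE hy) hx eqxx => h.
    by have := le_trans h hle; rewrite hA' leye_eq.
  have hW : \sum_(t < T) Y t / X t <= S ^+ 2 / MX.
    by move: hle; rewrite alpha_fin // hA' lee_fin.
  have hd t := @tangent _ (X t) (Y t) (X' t) (hY0 t) (hX0 t) (hX'0 t)
     (fun hy => conj (hXnz t hy) (hX'nz t hy)).
  have hc : \sum_(t < T) Y t / X' t ^+ 2 * X t <= S ^+ 2 / MX.
    apply: le_trans (ler_sum _ (fun t _ => hYX'2 t)) _.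
    rewrite (eq_bigr (fun t => S ^+ 2 / MX ^+ 2 * (kappa t * X t))) => [|t _].
      by rewrite -mulr_sumr hXsum le_eqVlt; apply/orP; left; apply/eqP; field.
    by field.
  have hdsum : \sum_(t < T) (Y t / X t - (2 * (Y t / X' t) - Y t / X' t ^+ 2 * X t)) = 0.
    apply/eqP; rewrite eq_le; apply/andP; split; last first.
      by apply: sumr_ge0 => t _; case: (hd t).
    rewrite sumrB sumrB -mulr_sumr hsumYX'.
    lra.
  have hd0 := psumr_eq0P (fun t _ => proj1 (hd t)) hdsum.
  have hXX' t : Y t != 0 -> X t = X' t by move=> hy; apply: (proj2 (hd t)) => //; exact: hd0.
  have hXeq t : X t = X' t.
    have hterm u : 0 <= kappa u * (X u - X' u).
      have [hy|hy] := eqVneq (Y u) 0.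
        have -> : X' u = 0 by move/eqP: hy; rewrite -hsY /X' => /eqP ->; rewrite mulr0 mul0r.
        by rewrite subr0 mulr_ge0 // ltW.
      by rewrite hXX' // subrr mulr0.
    have hz : \sum_(u < T) kappa u * (X u - X' u) = 0.
      rewrite (eq_bigr (fun u => kappa u * X u - kappa u * X' u)) => [|u _]; last by rewrite mulrBr.
      by rewrite sumrB hXsum (proj2 fX') subrr.
    have := @psumr_eq0P _ _ _ _ (fun u _ => hterm u) hz t isT.
    by move/eqP; rewrite mulf_eq0 (negbTE (hk0 t)) subr_eq0 => /eqP.
  pose P t := fun u : 'I_T => if u == t then MY / sigma t else 0.
  have fP t : feasible sigma MY (P t).
    split => [u|]; first by rewrite /P; case: (u == t) => //; rewrite divr_ge0 ?ltW.
    rewrite (bigD1 t) //= big1 => [|u /negbTE hu]; last by rewrite /P hu mulr0.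
    by rewrite /P eqxx addr0; field.
  have hPnz t : P t t != 0 by rewrite /P eqxx mulf_neq0 ?invr_eq0.
  have hPge0 t u : 0 <= P t u by rewrite /P; case: (u == t) => //; rewrite divr_ge0 ?ltW.
  pose W := \sum_(t < T) Y t / X t.
  have hAW : alpha X Y = W%:E by rewrite alpha_fin.
  have hW0 : 0 <= W by apply: sumr_ge0 => t _; rewrite divr_ge0.
  have hYpos t : Y t != 0.
    apply/negP => /eqP hy0.
    have hXt0 : X t = 0.
      by rewrite hXeq /X'; move/eqP: hy0; rewrite -hsY => /eqP ->; rewrite mulr0 mul0r.
    have hinf : alpha X (P t) = +oo%E.
      apply/eqP; rewrite -leye_eq.
      have := term_le_alpha t hX0 (hPge0 t).
      by rewrite /ratio_term (negbTE (hPnz t)) hXt0 eqxx.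
    have := hYopt _ (fP t).
    rewrite /piWL hinf hAW /=.
    have := Lfun_pos hW0.
    move=> hp; rewrite /= in hp. lra.
  have hXpos t : 0 < X t by rewrite lt_def (hXnz t (hYpos t)) hX0.
  have hdev t : MY / sigma t / X t <= W.
    have hA : alpha X (P t) = (MY / sigma t / X t)%:E.
      rewrite alpha_fin => [|u _]; last by rewrite gt_eqF.
      congr (_%:E); rewrite (bigD1 t) //= big1 => [|u /negbTE hu]; last by rewrite /P hu mul0r.
      by rewrite /P eqxx addr0.
    have := hYopt _ (fP t); rewrite /piWL => h.
    have h2 : Lfun (alpha X Y) <= Lfun (alpha X (P t)) by lra.
    have := Lfun_anti hA0 (alpha_ge0 hX0 (hPge0 t)) h2.
    by rewrite hA hAW lee_fin.
  have hXnz' t : X t != 0 by rewrite gt_eqF.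
  have hsum0 : \sum_(t < T) sigma t * Y t * (W - MY / sigma t / X t) = 0.
    rewrite (eq_bigr (fun t => W * (sigma t * Y t) - MY * (Y t / X t))) => [|t _].
      by rewrite sumrB -!mulr_sumr hYsum -/W mulrC subrr.
    by field; rewrite hs0 hXnz'.
  have hterm t : 0 <= sigma t * Y t * (W - MY / sigma t / X t).
    by rewrite mulr_ge0 ?subr_ge0 ?hdev // mulr_ge0 // ltW.
  have hcW t : MY / sigma t / X t = W.
    have := @psumr_eq0P _ _ _ _ (fun u _ => hterm u) hsum0 t isT.
    move/eqP; rewrite mulf_eq0 mulf_eq0 (negbTE (hs0 t)) (negbTE (hYpos t)) /= subr_eq0.
    by move/eqP.
  have hWp : 0 < W by rewrite -(hcW t0) divr_gt0 // divr_gt0.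
  have hW0' : W != 0 by rewrite gt_eqF.
  have hXform t : X t = MY / W / sigma t.
    by rewrite -(hcW t); field; rewrite hs0 hXnz' hMY0.
  have hMYW : MY / W = MX / r.
    have e : MX = MY / W * r.
      rewrite -hXsum /r mulr_sumr; apply: eq_bigr => t _.
      by rewrite hXform; field; rewrite hs0.
    by rewrite e; field; rewrite hr0 hW0'.
  have hXfin : X = Xs.
    by apply: functional_extensionality => t; rewrite hXform hMYW hXs; field; rewrite hs0 hr0.
  have hY3 t : Y t = S ^+ 2 / r ^+ 2 * (kappa t / sigma t ^+ 2).
    have e : s t = S * X t / MX by rewrite hXeq /X'; field; rewrite hS0 hMX0.
    by rewrite hYs' e hXfin hXs; field; rewrite hs0 hr0.
  have hS2 : S ^+ 2 / r ^+ 2 = MY / r.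
    have e : MY = S ^+ 2 / r ^+ 2 * r.
      rewrite -hYsum (eq_bigr (fun t => S ^+ 2 / r ^+ 2 * (kappa t / sigma t))) => [|t _].
        by rewrite -mulr_sumr.
      by rewrite hY3; field; rewrite hs0.
    by rewrite e; field; rewrite hr0.
  split => //.
  by apply: functional_extensionality => t; rewrite hY3 hS2 hYs; field; rewrite hs0 hr0.
Qed.
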